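(* Let $p$ be prime, $\mathbb{F}=\mathbb{F}_p$, $n\ge1$. Let $r_1,\dots,r_n$ be chosen uniformly and independently from $\mathbb{F}^N$. For each nonzero sequence $\kappa=(k_1,\dots,k_n)$ with $0\le k_i<p$, let $X_\kappa=\sum_{j=1}^N\prod_{i=1}^nr_i(j)^{k_i}$, and let $X=(X_\kappa)_\kappa\in\mathbb{F}^{K}$, $K=p^n-1$. Let $P$ be the distribution of $X$ and $U$ the uniform distribution on $\mathbb{F}^K$. Then there are constants $c>0$ and $N_0$ depending on $n,p$ but not on $N$ such that for all $N\ge N_0$, $$\|P-U\|_1\le\exp\{-cN\}.$$
   Context: $\|\cdot\|_1$ is the statistical ($\ell_1$) distance between distributions on $\mathbb{F}^K$; $r(j)$ is the $j$-th coordinate of $r$. *)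

(* Defs.v *)
From HB Require Import structures.
From mathcomp Require Import all_boot all_order all_algebra.
From mathcomp Require Import all_classical all_reals all_analysis.
Set Implicit Arguments. Unset Strict Implicit. Unset Printing Implicit Defensive.
Import Order.TTheory GRing.Theory Num.Theory.
Local Open Scope ring_scope.

Definition kidx (n p : nat) :=
  {k : {ffun 'I_n -> 'I_p} | [exists i, (k i : nat) != 0%N]}.

(* The random input: r_1,...,r_n in F^N, r i j = r_{i+1}(j+1). *)
Definition inputs (p n N : nat) := {ffun 'I_n -> {ffun 'I_N -> 'F_p}}.

(* X_kappa = sum_j prod_i r_i(j)^{k_i}  (with 0^0 = 1). *)
Definition Xvec (p n N : nat) (r : inputs p n N) : {ffun kidx n p -> 'F_p} :=
  [ffun k : kidx n p => (\sum_(j < N) \prod_(i < n) (r i j) ^+ (val k i : nat) : 'F_p)].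

Definition distP (R : realType) (p n N : nat) (x : {ffun kidx n p -> 'F_p}) : R :=
  (#|[set r : inputs p n N | Xvec r == x]|)%:R / (#|{: inputs p n N}|)%:R.

Definition distU (R : realType) (p n : nat) (x : {ffun kidx n p -> 'F_p}) : R :=
  1 / (#|{: {ffun kidx n p -> 'F_p}}|)%:R.

Definition l1dist_PU (R : realType) (p n N : nat) : R :=
  \sum_(x : {ffun kidx n p -> 'F_p}) `|distP R N x - distU R x|.

(* Main.v *)
Require Import Defs.
From HB Require Import structures.
From mathcomp Require Import all_boot all_order all_algebra all_field.
From mathcomp Require Import all_classical all_reals all_analysis.
From mathcomp Require Import ring lra.
Import Order.TTheory GRing.Theory Num.Theory.
Local Open Scope ring_scope.
Section Alg.
Variables (p n : nat).
Hypothesis hp : prime p.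

Local Notation F := 'F_p.
Local Notation W := {ffun 'I_n -> 'F_p}.
Local Notation Kap := {ffun 'I_n -> 'I_p}.

Lemma fermat (z : F) : z != 0 -> z ^+ p.-1 = 1.
Proof.
move=> nz; have := expf_card z; rewrite card_Fp // -[X in _ ^+ X](prednK (prime_gt0 hp)) exprS.
by move=> h; apply: (mulfI nz); rewrite mulr1.
Qed.

Lemma indic1 (a t : F) : ((a == t)%:R : F) = 1 - (t - a) ^+ p.-1.
Proof.
case: eqP => [->|/eqP ne].
  rewrite subrr expr0n; have : p.-1 != 0%N by rewrite -lt0n -ltnS prednK ?prime_gt1 ?prime_gt0.
  by move/negbTE => ->; rewrite subr0.
by rewrite fermat ?subrr // subr_eq0 eq_sym.
Qed.

Definition ea (a : F) (k : nat) : F :=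
  (k == 0%N)%:R - (-a) ^+ (p.-1 - k) *+ 'C(p.-1, k).

Lemma indic1_poly (a t : F) : ((a == t)%:R : F) = \sum_(k < p) ea a k * t ^+ k.
Proof.
rewrite indic1 -(big_mkord xpredT (fun k => ea a k * t ^+ k)).
have -> : index_iota 0 p = index_iota 0 p.-1.+1 by rewrite prednK ?prime_gt0.
rewrite big_mkord (addrC t) exprDn.
under [RHS]eq_bigr do rewrite /ea mulrBl mulrnAl.
rewrite sumrB; congr (_ - _).
by rewrite big_ord_recl /= mul1r expr0 big1 ?addr0 // => i _; rewrite mul0r.
Qed.

Definition mono (y : W) (k : Kap) : F := \prod_i y i ^+ (k i : nat).
Definition eL (x : W) (k : Kap) : F := \prod_i ea (x i) (k i).

Lemma indic_prod (x y : W) : ((x == y)%:R : F) = \prod_i ((x i == y i)%:R : F).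
Proof.
case: (x =P y) => [->|ne].
  by rewrite big1 // => i _; rewrite eqxx.
case: (pickP (fun i => x i != y i)) => [i nei | h].
  by rewrite (bigD1 i) //= (negbTE nei) mul0r.
by case: ne; apply/ffunP => i; move: (h i) => /negbFE/eqP.
Qed.

Lemma lagr (x y : W) : ((x == y)%:R : F) = \sum_k eL x k * mono y k.
Proof.
rewrite indic_prod.
under eq_bigr do rewrite indic1_poly.
rewrite bigA_distr_bigA /=; apply: eq_bigr => k _.
by rewrite /eL /mono -big_split.
Qed.

Definition Phi (c : {ffun W -> F}) : {ffun Kap -> F} :=
  [ffun k => \sum_y c y * mono y k].

Lemma Phi_inv (c : {ffun W -> F}) (x : W) : c x = \sum_k eL x k * Phi c k.
Proof.
under eq_bigr do rewrite ffunE mulr_sumr.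
rewrite exchange_big /=.
rewrite (bigD1 x) //= [X in _ + X]big1 ?addr0.
  have := lagr x x; rewrite eqxx /= => h.
  transitivity (c x * \sum_k eL x k * mono x k); first by rewrite -h mulr1.
  rewrite mulr_sumr; apply: eq_bigr => k _.
  by rewrite mulrCA.
move=> y ny; have := lagr x y; rewrite eq_sym (negbTE ny) => h.
under eq_bigr do rewrite mulrCA.
by rewrite -mulr_sumr -h mulr0.
Qed.

Lemma Phi_inj : injective Phi.
Proof.
move=> c c' e; apply/ffunP => x; by rewrite Phi_inv e -Phi_inv.
Qed.

Lemma Phi_bij : bijective Phi.
Proof.
have := @inj_card_bij _ _ _ Phi_inj; apply.
by rewrite !card_ffun !card_ord (Fp_cast hp).
Qed.

Definition v (y : W) : {ffun kidx n p -> F} := [ffun k => mono y (val k)].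

Lemma represent (x : {ffun kidx n p -> F}) :
  exists c : W -> nat, (forall y, c y < p)%N /\ x = \sum_y (v y) *+ c y.
Proof.
pose w : {ffun Kap -> F} := [ffun k => if insub k is Some k' then x k' else 0].
have [g _ gK] := Phi_bij.
exists (fun y => (g w y : nat)); split.
  by move=> y; rewrite -[X in (_ < X)%N](Fp_cast hp) ltn_ord.
apply/ffunP => k; rewrite sum_ffunE.
under eq_bigr do rewrite ffunMnE ffunE -mulr_natr natr_Zp mulrC.
have := congr1 (fun f : {ffun Kap -> F} => f (val k)) (gK w).
by rewrite ffunE /w ffunE valK => ->.
Qed.

Lemma v0 : v 0 = 0.
Proof.
apply/ffunP => k; rewrite !ffunE /mono.
have /existsP [i ni] := valP k.
by rewrite (bigD1 i) //= ffunE expr0n (negbTE ni) mul0r.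
Qed.

End Alg.

Section Count.
Variables (R : realType) (p n : nat).
Hypothesis hp : prime p.
Local Notation F := 'F_p.
Local Notation W := {ffun 'I_n -> 'F_p}.
Local Notation T := {ffun kidx n p -> 'F_p}.
Local Notation vv := (@v p n).

Lemma Xvec_col N (r : inputs p n N) : Xvec r = \sum_j vv [ffun i => r i j].
Proof.
apply/ffunP => k; rewrite sum_ffunE ffunE; apply: eq_bigr => j _.
by rewrite ffunE /mono; apply: eq_bigr => i _; rewrite ffunE.
Qed.

Definition joinI N (rp : inputs p n N * W) : inputs p n N.+1 :=
  [ffun i => [ffun j => if unlift ord_max j is Some j' then rp.1 i j' else rp.2 i]].
Definition splitI N (r : inputs p n N.+1) : inputs p n N * W :=
  ([ffun i => [ffun j => r i (lift ord_max j)]], [ffun i => r i ord_max]).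

Lemma joinK N : cancel (@joinI N) (@splitI N).
Proof.
case=> r y; congr (_, _); apply/ffunP => i; rewrite !ffunE.
  by apply/ffunP => j; rewrite !ffunE liftK.
by rewrite unlift_none.
Qed.

Lemma splitK N : cancel (@splitI N) (@joinI N).
Proof.
move=> r; apply/ffunP => i; apply/ffunP => j; rewrite !ffunE.
by case: unliftP => [j' ->|->] //=; rewrite ?ffunE.
Qed.

Lemma Xvec_join N rp : Xvec (@joinI N rp) = Xvec rp.1 + vv rp.2.
Proof.
rewrite !Xvec_col big_ord_recr /=; congr (_ + _).
  apply: eq_bigr => j _; congr (vv _); apply/ffunP => i; rewrite !ffunE.
  have -> : widen_ord (leqnSn N) j = lift ord_max j by apply: val_inj; rewrite /= /bump leqNgt ltn_ord.
  by rewrite liftK.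
by congr (vv _); apply/ffunP => i; rewrite !ffunE unlift_none.
Qed.

Definition cnt N (x : T) : R := \sum_(r : inputs p n N) ((Xvec r == x)%:R : R).

Lemma card_cnt N x : (#|[set r : inputs p n N | Xvec r == x]|)%:R = cnt N x.
Proof.
rewrite -sum1_card natr_sum /cnt big_mkcond /=.
by apply: eq_bigr => r _; rewrite inE; case: (_ == _).
Qed.

Lemma cnt_step N x : cnt N.+1 x = \sum_(y : W) cnt N (x - vv y).
Proof.
rewrite /cnt (reindex (@joinI N)); last first.
  by apply: onW_bij; exists (@splitI N); [apply: joinK | apply: splitK].
under eq_bigr do rewrite Xvec_join.
rewrite -(pair_bigA _ (fun a b => ((Xvec a + vv b == x)%:R : R))) /= exchange_big.
apply: eq_bigr => y _; apply: eq_bigr => r _.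
by rewrite eq_sym -subr_eq eq_sym.
Qed.

Lemma card_inputs N : #|{: inputs p n N}| = (#|{: W}| ^ N)%N.
Proof. by rewrite !card_ffun !card_ord -!expnM mulnC. Qed.

End Count.

Section Markov.
Variables (R : realType) (p n : nat).
Hypothesis hp : prime p.
Local Notation F := 'F_p.
Local Notation W := {ffun 'I_n -> 'F_p}.
Local Notation T := {ffun kidx n p -> 'F_p}.
Local Notation vv := (@v p n).
Local Notation D N := (@distP R p n N).
Local Notation Q := (#|{: W}|).

Lemma Q_gt0 : (0 < Q)%N.
Proof. by apply/card_gt0P; exists 0. Qed.

Lemma Qr_gt0 : 0 < (Q%:R : R).
Proof. by rewrite ltr0n Q_gt0. Qed.

Lemma D_cnt N x : D N x = cnt R p n N x / (Q%:R) ^+ N.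
Proof. by rewrite /distP card_cnt card_inputs natrX. Qed.

Lemma D_ge0 N x : 0 <= D N x.
Proof. by rewrite /distP divr_ge0. Qed.

Lemma D_step N x : D N.+1 x = (\sum_(y : W) D N (x - vv y)) / Q%:R.
Proof.
rewrite D_cnt cnt_step exprSr invfM mulrA mulr_suml; congr (_ * _).
by apply: eq_bigr => y _; rewrite D_cnt.
Qed.

Lemma D_0 x : D 0 x = (x == 0)%:R.
Proof.
rewrite D_cnt expr0 divr1 /cnt.
have H : forall r : inputs p n 0, Xvec r = 0.
  by move=> r; rewrite Xvec_col big_ord0.
under eq_bigr do rewrite H.
rewrite sumr_const card_inputs expn0 mulr1n.
by rewrite eq_sym.
Qed.

Lemma sum_shift (f : T -> R) (a : T) : \sum_(x : T) f (x - a) = \sum_x f x.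
Proof. by rewrite [RHS](reindex_inj (addIr (- a))). Qed.

Lemma sum_refl (f : T -> R) (x : T) : \sum_(z : T) f (x - z) = \sum_(z : T) f z.
Proof.
have inj : injective (fun z : T => x - z) by move=> a b /addrI/oppr_inj.
by rewrite [RHS](reindex_inj inj).
Qed.

Lemma D_mass N : \sum_x D N x = 1.
Proof.
elim: N => [|N IH].
  rewrite (bigD1 (0 : T)) //= D_0 eqxx big1 ?addr0 // => x nx; by rewrite D_0 (negbTE nx).
under eq_bigr do rewrite D_step.
rewrite -mulr_suml exchange_big /=.
under eq_bigr do rewrite sum_shift IH.
by rewrite sumr_const -[X in X / _]mulr_natr mul1r mulfV // ?pnatr_eq0 -lt0n Q_gt0.
Qed.

Lemma D_conv N M x : D (N + M) x = \sum_z D N z * D M (x - z).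
Proof.
elim: M x => [|M IH] x.
  rewrite addn0 (bigD1 x) //= D_0 subrr eqxx mulr1 big1 ?addr0 // => z nz.
  by rewrite D_0 subr_eq0 eq_sym (negbTE nz) mulr0.
rewrite addnS D_step.
under eq_bigr do rewrite IH.
rewrite exchange_big mulr_suml; apply: eq_bigr => z _.
rewrite D_step mulrA mulr_sumr; congr (_ * _); apply: eq_bigr => y _.
by rewrite addrAC.
Qed.


Lemma D_lb M (x z : T) (y : W) a : a <= D M z -> x - vv y = z ->
  a / Q%:R <= D M.+1 x.
Proof.
move=> az e; rewrite D_step ler_wpM2r // ?invr_ge0 ?ler0n //.
apply: (le_trans az); rewrite (bigD1 y) //= e lerDl sumr_ge0 // => ? _.
exact: D_ge0.
Qed.

Lemma D_reach M (s : seq W) : (size s <= M)%N ->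
  ((Q%:R : R) ^+ M)^-1 <= D M (\sum_(y <- s) vv y).
Proof.
elim: M s => [|M IH] [|y s] //=.
- by rewrite big_nil D_0 eqxx expr0 invr1.
- move=> _; rewrite exprSr invfM; apply: (@D_lb M _ (\sum_(y <- [::]) vv y) 0).
    exact: IH.
  by rewrite v0 subr0.
- rewrite ltnS => hs; rewrite exprSr invfM big_cons.
  apply: (@D_lb M _ (\sum_(y <- s) vv y) y); first exact: IH.
  by rewrite addrC addKr.
Qed.

Lemma sum_nseq (k : nat) (a : W) : \sum_(y <- nseq k a) vv y = vv a *+ k.
Proof. by elim: k => [|k IH]; rewrite ?big_nil ?mulr0n //= big_cons IH mulrS. Qed.

Lemma D_minor x : ((Q%:R : R) ^+ (Q * p))^-1 <= D (Q * p) x.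
Proof.
have [c [cb ->]] := @represent p n hp x.
have H : forall l : seq W, exists s : seq W, (size s <= size l * p)%N /\ \sum_(y <- s) vv y = \sum_(y <- l) vv y *+ c y.
  elim=> [|a l [s [hs es]]]; first by exists [::]; rewrite !big_nil.
  exists (nseq (c a) a ++ s); split.
    by rewrite size_cat size_nseq mulSn leq_add // ltnW.
  by rewrite big_cat big_cons sum_nseq es.
have [s [hs es]] := H (enum W).
rewrite -big_enum /= -es; apply: D_reach.
by rewrite -cardT in hs.
Qed.

Lemma dcontr N M a : 0 <= a -> (forall x, a <= D M x) ->
  l1dist_PU R p n (N + M) <= (1 - #|{: T}|%:R * a) * l1dist_PU R p n N.
Proof.
move=> a0 aK.
set u : R := 1 / #|{: T}|%:R.
have Tpos : (0 < #|{: T}|)%N by apply/card_gt0P; exists 0.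
have su0 : u * #|{: T}|%:R = 1.
  by rewrite /u div1r mulVf // pnatr_eq0 -lt0n.
have su : \sum_(z : T) u = 1.
  by rewrite sumr_const -mulr_natr; exact: su0.
have key : forall x, D (N + M) x - u =
    \sum_z (D N z - u) * (D M (x - z) - a).
  move=> x; under eq_bigr do rewrite mulrBr mulrBl mulrBl.
  have e1 : \sum_(z : T) u * D M (x - z) = u.
    by rewrite -mulr_sumr (sum_refl (D M)) D_mass mulr1.
  have e2 : \sum_(z : T) D N z * a = a by rewrite -mulr_suml D_mass mul1r.
  have e3 : \sum_(z : T) u * a = a by rewrite -mulr_suml su mul1r.
  by rewrite !sumrB e1 e2 e3 subrr subr0 D_conv.
rewrite /l1dist_PU /distU -/u.
under eq_bigr do rewrite key.
apply: (le_trans (ler_sum _ (fun x _ => ler_norm_sum _ _ _))).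
under eq_bigr do under eq_bigr do rewrite normrM (ger0_norm (x := _ - a)) ?subr_ge0 //.
rewrite exchange_big mulr_sumr; apply: ler_sum => z _.
rewrite -mulr_sumr mulrC; apply: ler_wpM2r => //.
rewrite sumrB sum_shift D_mass sumr_const mulr_natl; exact: lexx.
Qed.

End Markov.

Section Final.
Variables (R : realType) (p n : nat).
Hypothesis hp : prime p.
Local Notation W := {ffun 'I_n -> 'F_p}.
Local Notation T := {ffun kidx n p -> 'F_p}.
Local Notation D N := (@distP R p n N).
Local Notation Q := (#|{: W}|).
Local Notation d N := (l1dist_PU R p n N).
Local Notation m := (Q * p)%N.

Lemma d_ge0 N : 0 <= d N.
Proof. by apply: sumr_ge0 => x _. Qed.

Lemma d_mono N M : d (N + M) <= d N.
Proof.
have := @dcontr R p n N M 0 (lexx 0) (fun x => D_ge0 R p n M x).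
by rewrite mulr0 subr0 mul1r.
Qed.

Definition theta : R := 1 - #|{: T}|%:R * ((Q%:R : R) ^+ m)^-1.

Lemma theta_ge0 : 0 <= theta.
Proof.
rewrite /theta subr_ge0.
have := @ler_sum _ T (index_enum T) xpredT (fun _ => ((Q%:R : R) ^+ m)^-1) (D m)
  (fun x _ => D_minor R p n hp x).
rewrite D_mass sumr_const => h; rewrite mulr_natl; exact: h.
Qed.

Lemma theta_lt1 : theta < 1.
Proof.
rewrite /theta ltrBlDr ltrDl mulr_gt0 // ?ltr0n ?invr_gt0 ?exprn_gt0 ?Qr_gt0 //.
by apply/card_gt0P; exists 0.
Qed.

Lemma d_contract N : d (N + m) <= theta * d N.
Proof.
by apply: dcontr => // x; exact: D_minor.
Qed.

Lemma d_iter k : d (k * m) <= theta ^+ k * d 0.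
Proof.
elim: k => [|k IH]; first by rewrite mul0n expr0 mul1r.
rewrite mulSnr exprS -mulrA; apply: (le_trans (d_contract _)).
by apply: ler_wpM2l; [exact: theta_ge0 | exact: IH].
Qed.

Lemma d_bound N : d N <= theta ^+ (N %/ m) * d 0.
Proof.
rewrite {1}(divn_eq N m); apply: le_trans (d_mono _ _) _; exact: d_iter.
Qed.

End Final.


Theorem proposition2p9 (R : realType) (p n : nat) (hp : prime p) (hn : (1 <= n)%N) :
  exists c : R, 0 < c /\
  exists N0 : nat, forall N : nat, (N0 <= N)%N ->
    l1dist_PU R p n N <= expR (- (c * N%:R)).
Proof.
have t0 := theta_ge0 R p n hp; have t1 := theta_lt1 R p n.
set th := theta R p n in t0 t1.
pose t' : R := (1 + th) / 2.
have t'0 : 0 < t' by rewrite /t'; lra.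
have t'1 : t' < 1 by rewrite /t'; lra.
have tt' : th <= t' by rewrite /t'; lra.
pose L := - ln t'.
have L0 : 0 < L by rewrite /L oppr_gt0; apply: ln_lt0; rewrite t'0 t'1.
pose m := (#|{: {ffun 'I_n -> 'F_p}}| * p)%N.
have m0 : (0 < m)%N by rewrite /m muln_gt0 Q_gt0 prime_gt0.
have mr0 : (0 : R) < m%:R by rewrite ltr0n.
pose B := L / 2.
have B0 : 0 < B by rewrite /B; lra.
pose c := B / m%:R.
pose C := l1dist_PU R p n 0.
have C0 : 0 <= C := d_ge0 R p n 0.
pose b := Num.Def.archi_bound (C / B).
have hb : C / B < b%:R by apply: archi_boundP; rewrite divr_ge0 // ltW.
exists c; split; first by rewrite /c divr_gt0.
exists (b.+1 * m)%N => N hN.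
pose k := (N %/ m)%N.
have hk : (b.+1 <= k)%N by rewrite /k -(mulnK b.+1 m0) leq_div2r.
have hNk : (N < k.+1 * m)%N by exact: ltn_ceil.
apply: le_trans (d_bound R p n hp N) _.
rewrite -/m -/k -/C; clearbody k b m.
have e1 : th ^+ k <= t' ^+ k by apply: lerXn2r; rewrite // nnegrE ltW.
have e2 : t' ^+ k = expR (k%:R * ln t') by rewrite expRM_natl lnK // posrE.
have e3 : c * N%:R <= B * k.+1%:R.
  have -> : B * k.+1%:R = c * (k.+1 * m)%N%:R.
    by rewrite natrM mulrCA /c divfK ?gt_eqF // mulrC.
  by rewrite ler_wpM2l ?ler_nat ?(ltnW hNk) // /c ltW // divr_gt0.
have kr : b%:R + 1 <= (k%:R : R) by rewrite natr1 ler_nat.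
have e4 : C <= B * (k%:R - 1).
  have : B * (C / B) < B * b%:R by rewrite ltr_pM2l.
  rewrite mulrCA divff ?gt_eqF // mulr1 => h. apply: ltW; apply: (lt_le_trans h); apply: ler_wpM2l; [exact: ltW | lra].
have e5 : C <= expR (B * (k%:R - 1)).
  apply: (le_trans e4); apply: le_trans (expR_ge1Dx _); lra.
apply: (le_trans (ler_wpM2r C0 e1)); rewrite e2.
apply: (le_trans (y := expR (- (B * k.+1%:R)))); last by rewrite ler_expR lerN2.
have -> : - (B * k.+1%:R) = k%:R * ln t' + B * (k%:R - 1).
  have hL : ln t' = - (B + B) by rewrite /B /L; lra.
  rewrite hL -natr1; move: (k%:R : R) (B : R) => y z; ring.
by rewrite expRD ler_wpM2l // ltW // expR_gt0.
Qed.
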